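(* Let $\mathcal{X},\mathcal{Y}$ be finite sets, $p(X,Y)$ a fully supported probability distribution on $\mathcal{X}\times\mathcal{Y}$, and $0\le\lambda\le I(X;Y)$. For $\kappa_{\mathcal{X}}\in C(\mathcal{X},\mathbb{N})$, $\kappa_{\mathcal{Y}}\in C(\mathcal{Y},\mathbb{N})$, let $\kappa=\kappa_{\mathcal{X}}\otimes\kappa_{\mathcal{Y}}\in C(\mathcal{X}\times\mathcal{Y},\mathbb{N}\times\mathbb{N})$, $\kappa(t_X,t_Y|x,y)=\kappa_{\mathcal{X}}(t_X|x)\kappa_{\mathcal{Y}}(t_Y|y)$, and let $q(x,y,t_X,t_Y)=p(x,y)\kappa_{\mathcal{X}}(t_X|x)\kappa_{\mathcal{Y}}(t_Y|y)$. Consider: (A) minimise $I_\kappa(X,Y;T)$, with $T=(T_X,T_Y)$, over all such split channels $\kappa=\kappa_{\mathcal{X}}\otimes\kappa_{\mathcal{Y}}$ subject to $D(\kappa(p(X,Y))\|\kappa(p(X)p(Y)))=\lambda$; (S) minimise $I_q(X;T_X)+I_q(Y;T_Y)$ over pairs $(q(T_X|X),q(T_Y|Y))=(\kappa_{\mathcal{X}},\kappa_{\mathcal{Y}})$ subject to $I_q(T_X;T_Y)\ge\lambda$. Then: (i) in (S), replacing the constraint $I_q(T_X;T_Y)\ge\lambda$ by $I_q(T_X;T_Y)=\lambda$ does not change the set of solutions; (ii) the sets of solutions of (A) and (S) are identical (identifying $\kappa_{\mathcal{X}}\otimes\kappa_{\mathcal{Y}}$ with the pair $(\kappa_{\ma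thcal{X}},\kappa_{\mathcal{Y}})$).
   Context: For sets $\mathcal{A},\mathcal{B}$, $C(\mathcal{A},\mathcal{B})$ denotes the set of channels (conditional probabilities) from $\mathcal{A}$ to $\mathcal{B}$. For a channel $\kappa$ and a distribution $r$ on its input space, $\kappa(r)$ denotes the output distribution $\sum_a\kappa(\cdot|a)r(a)$. $I_\kappa(X,Y;T)$ is computed from $p(x,y)\kappa(t|x,y)$; $D$ is the Kullback–Leibler divergence; $p(X),p(Y)$ are the marginals of $p(X,Y)$. *)

(* Defs.v *)
From HB Require Import structures.
From mathcomp Require Import all_boot all_order all_algebra.
From mathcomp Require Import all_classical all_reals all_analysis.
Set Implicit Arguments. Unset Strict Implicit. Unset Printing Implicit Defensive.
Import Order.TTheory GRing.Theory Num.Theory.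
Local Open Scope classical_set_scope.
Local Open Scope ring_scope.

Section InfoDefs.
Variable R : realType.

Definition csum (T : choiceType) (f : T -> R) : \bar R :=
  (\esum_(t in [set: T]) (fun u => (f u)%:E)^\+ t
   - \esum_(t in [set: T]) (fun u => (f u)%:E)^\- t)%E.

Definition is_channel (A : finType) (k : A -> nat -> R) : Prop :=
  (forall a t, 0 <= k a t) /\
  (forall a, (\esum_(t in [set: nat]) (k a t)%:E = 1)%E).

Definition chan_out (A : finType) (B : Type) (k : A -> B -> R) (r : A -> R)
  (b : B) : R := \sum_(a : A) k a b * r a.

Definition ktensor (X Y : finType) (kX : X -> nat -> R) (kY : Y -> nat -> R)
  : X * Y -> nat * nat -> R := fun xy t => kX xy.1 t.1 * kY xy.2 t.2.

Definition mi_chan (A : finType) (B : choiceType) (r : A -> R) (k : A -> B -> R)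
  : \bar R :=
  csum (fun ab : A * B =>
    r ab.1 * k ab.1 ab.2 * ln (r ab.1 * k ab.1 ab.2 / (r ab.1 * chan_out k r ab.2))).

Definition kl (B : choiceType) (a b : B -> R) : \bar R :=
  csum (fun t => a t * ln (a t / b t)).

Definition margX (X Y : finType) (p : X * Y -> R) (x : X) : R := \sum_(y : Y) p (x, y).
Definition margY (X Y : finType) (p : X * Y -> R) (y : Y) : R := \sum_(x : X) p (x, y).
Definition prodmarg (X Y : finType) (p : X * Y -> R) (xy : X * Y) : R :=
  margX p xy.1 * margY p xy.2.

Definition mutinf (X Y : finType) (p : X * Y -> R) : R :=
  \sum_(xy : X * Y) p xy * ln (p xy / prodmarg p xy).

Definition mi_TT (X Y : finType) (p : X * Y -> R) (kX : X -> nat -> R)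
  (kY : Y -> nat -> R) : \bar R :=
  let qT := chan_out (ktensor kX kY) p in
  let qTX := chan_out kX (margX p) in
  let qTY := chan_out kY (margY p) in
  csum (fun t : nat * nat => qT t * ln (qT t / (qTX t.1 * qTY t.2))).

Definition chpair (X Y : finType) : Type := ((X -> nat -> R) * (Y -> nat -> R))%type.

Definition feasA (X Y : finType) (p : X * Y -> R) (lam : R) (k : chpair X Y) : Prop :=
  is_channel k.1 /\ is_channel k.2 /\
  kl (chan_out (ktensor k.1 k.2) p) (chan_out (ktensor k.1 k.2) (prodmarg p)) = lam%:E.
Definition objA (X Y : finType) (p : X * Y -> R) (k : chpair X Y) : \bar R :=
  mi_chan p (ktensor k.1 k.2).

Definition feasS_ge (X Y : finType) (p : X * Y -> R) (lam : R) (k : chpair X Y) : Prop :=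
  is_channel k.1 /\ is_channel k.2 /\ (lam%:E <= mi_TT p k.1 k.2)%E.
Definition feasS_eq (X Y : finType) (p : X * Y -> R) (lam : R) (k : chpair X Y) : Prop :=
  is_channel k.1 /\ is_channel k.2 /\ mi_TT p k.1 k.2 = lam%:E.
Definition objS (X Y : finType) (p : X * Y -> R) (k : chpair X Y) : \bar R :=
  (mi_chan (margX p) k.1 + mi_chan (margY p) k.2)%E.

Definition is_argmin (P : Type) (feas : P -> Prop) (obj : P -> \bar R) (z : P) : Prop :=
  feas z /\ forall w, feas w -> (obj z <= obj w)%E.

End InfoDefs.

(* Main.v *)
Require Import Defs.
From HB Require Import structures.
From mathcomp Require Import all_boot all_order all_algebra.
From mathcomp Require Import all_classical all_reals all_analysis.
From mathcomp Require Import ring lra.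
Import Order.TTheory GRing.Theory Num.Theory.
Local Open Scope ring_scope.
Set Implicit Arguments. Unset Strict Implicit. Unset Printing Implicit Defensive.

Section Base.
Variable R : realType.
Local Open Scope ereal_scope.

Definition E (T : choiceType) (a : T -> R) : \bar R := \esum_(t in [set: T]) (a t)%:E.
Definition sbl (T : choiceType) (f : T -> R) := E (fun t => `|f t|%R) < +oo.
Definition S (T : choiceType) (a : T -> R) : R := fine (E a).
Definition rsum (T : choiceType) (f : T -> R) : R :=
  (S (fun t => Num.max (f t) 0%R) - S (fun t => Num.max (- f t) 0%R))%R.

Variable T : choiceType.
Implicit Types a b f g : T -> R.

Lemma E_ge0 a : (forall t, (0 <= a t)%R) -> 0 <= E a.
Proof. by move=> h; apply: esum_ge0 => t _; rewrite lee_fin. Qed.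

Lemma E_le a b : (forall t, (a t <= b t)%R) -> E a <= E b.
Proof. by move=> h; apply: le_esum => t _; rewrite lee_fin. Qed.

Lemma E_ext a b : (forall t, a t = b t) -> E a = E b.
Proof. by move=> h; apply: eq_esum => t _; rewrite h. Qed.

Lemma sbl_nnE a : (forall t, (0 <= a t)%R) -> sbl a = (E a < +oo).
Proof. by move=> h; rewrite /sbl (E_ext (b:=a)) // => t; rewrite ger0_norm. Qed.

Lemma E_fin a : (forall t, (0 <= a t)%R) -> sbl a -> E a = (S a)%:E.
Proof.
move=> h; rewrite sbl_nnE // => lt; rewrite /S fineK //.
by rewrite fin_numElt lt andbT (lt_le_trans (ltNyr 0%R)) // E_ge0.
Qed.

Lemma S_ge0 a : (forall t, (0 <= a t)%R) -> (0 <= S a)%R.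
Proof. by move=> h; apply: fine_ge0; apply: E_ge0. Qed.

Lemma sbl_le f g : (forall t, (`|f t| <= `|g t|)%R) -> sbl g -> sbl f.
Proof. by move=> h; rewrite /sbl => lt; apply: le_lt_trans lt; exact: E_le. Qed.

Lemma sbl_le' f g : (forall t, (`|f t| <= g t)%R) -> sbl g -> sbl f.
Proof.
move=> h; apply: sbl_le => t; apply: le_trans (h t) _; exact: ler_norm.
Qed.

Lemma E_D a b : (forall t, (0 <= a t)%R) -> (forall t, (0 <= b t)%R) ->
  E (fun t => a t + b t)%R = E a + E b.
Proof.
move=> ha hb; rewrite /E -esumD; last 2 first.
- by move=> t _; rewrite lee_fin.
- by move=> t _; rewrite lee_fin.
by apply: eq_esum => t _; rewrite EFinD.
Qed.

Lemma sblD f g : sbl f -> sbl g -> sbl (fun t => f t + g t)%R.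
Proof.
move=> hf hg; rewrite /sbl; apply: le_lt_trans (_ : E (fun t => `|f t| + `|g t|)%R < +oo).
  by apply: E_le => t; exact: ler_normD.
by rewrite E_D // lte_add_pinfty.
Qed.

Lemma E_Z (c : R) a : (0 <= c)%R -> (forall t, (0 <= a t)%R) ->
  E (fun t => c * a t)%R = c%:E * E a.
Proof.
move=> c0 ha; rewrite /E /esum -ereal_supZl //; last first.
  by apply/set0P; exists 0; exists set0; [exact: fsets_set0|rewrite fsbig_set0].
congr ereal_sup; apply/seteqP; split => x /=.
- move=> [A [finA _] <-]; exists (\sum_(i \in A) (a i)%:E); first by exists A.
  rewrite !fsumEFin // -EFinM; congr EFin.
  by rewrite fsbig_distrr.
- move=> [y [A fA <-] <-]; exists A => //; case: fA => finA _.
  rewrite !fsumEFin // -EFinM; congr EFin.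
  by rewrite fsbig_distrr.
Qed.

End Base.

Section RealAux.
Variable R : realType.
Lemma max_ge0 (x : R) : 0 <= Num.max x 0.
Proof. by rewrite le_max lexx orbT. Qed.
Lemma maxle_norm (x : R) : Num.max x 0 <= `|x|.
Proof. by rewrite ge_max normr_ge0 andbT ler_norm. Qed.
Lemma maxNle_norm (x : R) : Num.max (- x) 0 <= `|x|.
Proof. by rewrite ge_max normr_ge0 andbT -normrN ler_norm. Qed.
Lemma max_posneg (x : R) : x = Num.max x 0 - Num.max (- x) 0.
Proof.
rewrite !maxEle oppr_le0; have [h|h] := boolP (0 <= x).
- have [h'|h'] := boolP (x <= 0).
  + by rewrite subr0; apply/eqP; rewrite eq_le h h'.
  + by rewrite subr0.
- have h' : x <= 0 by rewrite leNgt; apply: contra h; apply: ltW.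
  by rewrite h' sub0r opprK.
Qed.
End RealAux.

Section Base2.
Variable R : realType.
Local Open Scope ereal_scope.
Variable T : choiceType.
Implicit Types a b f g : T -> R.

Lemma S_D a b : (forall t, (0 <= a t)%R) -> (forall t, (0 <= b t)%R) ->
  sbl a -> sbl b -> S (fun t => a t + b t)%R = (S a + S b)%R.
Proof. by move=> ha hb sa sb; rewrite /S E_D // (E_fin ha) // (E_fin hb). Qed.

Lemma sblZ (c : R) f : sbl f -> sbl (fun t => c * f t)%R.
Proof.
move=> hf; rewrite /sbl (E_ext (b := fun t => `|c| * `|f t|)%R); last first.
  by move=> t; rewrite normrM.
rewrite E_Z //; have := hf; rewrite /sbl => hf'.
have -> : E (fun t => `|f t|%R) = (S (fun t => `|f t|%R))%:E.
  by apply: E_fin => //; rewrite sbl_nnE.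
by rewrite -EFinM ltry.
Qed.

Lemma S_Z (c : R) a : (0 <= c)%R -> (forall t, (0 <= a t)%R) -> sbl a ->
  S (fun t => c * a t)%R = (c * S a)%R.
Proof. by move=> c0 ha sa; rewrite /S E_Z // (E_fin ha) // -EFinM. Qed.


Lemma sbl_pos f : sbl f -> sbl (fun t => Num.max (f t) 0%R).
Proof.
apply: sbl_le => t; rewrite (ger0_norm (max_ge0 _)).
by rewrite maxle_norm.
Qed.

Lemma sbl_neg f : sbl f -> sbl (fun t => Num.max (- f t)%R 0%R).
Proof.
apply: sbl_le => t; rewrite (ger0_norm (max_ge0 _)).
by rewrite maxNle_norm.
Qed.


Lemma csum_rsum f : sbl f -> csum f = (rsum f)%:E.
Proof.
move=> sf; rewrite /csum /rsum.
rewrite (_ : (fun u => (f u)%:E)^\+ = (fun u => (Num.max (f u) 0%R)%:E)); last first.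
  by apply/funext => u; rewrite funeposE /= EFin_max.
rewrite (_ : (fun u => (f u)%:E)^\- = (fun u => (Num.max (- f u)%R 0%R)%:E)); last first.
  by apply/funext => u; rewrite funenegE /= EFin_max.
have h1 := E_fin (a := fun u => Num.max (f u) 0%R) (fun t => max_ge0 _) (sbl_pos sf).
have h2 := E_fin (a := fun u => Num.max (- f u)%R 0%R) (fun t => max_ge0 _) (sbl_neg sf).
rewrite /E in h1 h2; rewrite h1 h2 //.
Qed.

End Base2.

Section Base3.
Variable R : realType.
Variable T : choiceType.
Implicit Types a b f g : T -> R.

Lemma S_ext a b : (forall t, a t = b t) -> S a = S b.
Proof. by move=> h; rewrite /S (E_ext h). Qed.

Lemma rsum_ext f g : (forall t, f t = g t) -> rsum f = rsum g.
Proof. by move=> h; rewrite (_ : f = g) //; apply/funext. Qed.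

Lemma sbl_ext f g : (forall t, f t = g t) -> sbl f -> sbl g.
Proof. by move=> h; rewrite (_ : f = g) //; apply/funext. Qed.

Lemma sblN f : sbl f -> sbl (fun t => - f t).
Proof. by apply: sbl_le => t; rewrite normrN. Qed.

Lemma sblB f g : sbl f -> sbl g -> sbl (fun t => f t - g t).
Proof. by move=> hf hg; apply: sblD => //; apply: sblN. Qed.

Lemma sbl0 : sbl (fun _ : T => 0 : R).
Proof. by rewrite /sbl /E esum1 // => t _; rewrite normr0. Qed.

Lemma S0 : S (fun _ : T => 0 : R) = 0.
Proof. by rewrite /S /E esum1. Qed.

Lemma rsum_diff a b : (forall t, 0 <= a t) -> (forall t, 0 <= b t) ->
  sbl a -> sbl b -> rsum (fun t => a t - b t) = S a - S b.
Proof.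
move=> ha hb sa sb; rewrite /rsum.
have sh : sbl (fun t => a t - b t) by apply: sblB.
have e : S (fun t => Num.max (a t - b t) 0 + b t) =
         S (fun t => Num.max (- (a t - b t)) 0 + a t).
  apply: S_ext => t; have := max_posneg (a t - b t).
  set P := Num.max _ _; set N := Num.max _ _ => h.
  lra.
move: e; rewrite !S_D //; try (by move=> t; apply: max_ge0);
  try exact: (sbl_neg sh); try exact: (sbl_pos sh).
move=> e; lra.
Qed.

Lemma rsum_nn a : (forall t, 0 <= a t) -> sbl a -> rsum a = S a.
Proof.
move=> ha sa; rewrite (rsum_ext (g := fun t => a t - 0)); last by move=> t; rewrite subr0.
by rewrite rsum_diff // ?S0 ?subr0 //; apply: sbl0.
Qed.

Lemma rsumD f g : sbl f -> sbl g -> rsum (fun t => f t + g t) = rsum f + rsum g.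
Proof.
move=> sf sg.
rewrite (rsum_ext (g := fun t => (Num.max (f t) 0 + Num.max (g t) 0) -
                                 (Num.max (- f t) 0 + Num.max (- g t) 0))); last first.
  by move=> t; rewrite {1}(max_posneg (f t)) {1}(max_posneg (g t)); ring.
rewrite rsum_diff; last 4 first.
- by move=> t; rewrite addr_ge0 // max_ge0.
- by move=> t; rewrite addr_ge0 // max_ge0.
- by apply: sblD; apply: sbl_pos.
- by apply: sblD; apply: sbl_neg.
rewrite !S_D //; try (by move=> t; apply: max_ge0); try (by apply: sbl_pos);
  try (by apply: sbl_neg).
by rewrite /rsum; ring.
Qed.

Lemma rsumN f : rsum (fun t => - f t) = - rsum f.
Proof.
rewrite /rsum (S_ext (a := fun t => Num.max (- - f t) 0) (b := fun t => Num.max (f t) 0)).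
  by ring.
by move=> t; rewrite opprK.
Qed.

Lemma rsumB f g : sbl f -> sbl g -> rsum (fun t => f t - g t) = rsum f - rsum g.
Proof. by move=> sf sg; rewrite rsumD ?rsumN //; apply: sblN. Qed.

Lemma rsumZ (c : R) f : sbl f -> rsum (fun t => c * f t) = c * rsum f.
Proof.
move=> sf; wlog c0 : c / 0 <= c.
  move=> H; case: (lerP 0 c) => hc; first exact: H.
  rewrite (rsum_ext (g := fun t => - ((- c) * f t))); last by move=> t; ring.
  by rewrite rsumN H ?oppr_ge0 ?ltW //; ring.
rewrite (rsum_ext (g := fun t => c * Num.max (f t) 0 - c * Num.max (- f t) 0)); last first.
  by move=> t; rewrite {1}(max_posneg (f t)); ring.
rewrite rsum_diff; last 4 first.
- by move=> t; rewrite mulr_ge0 // max_ge0.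
- by move=> t; rewrite mulr_ge0 // max_ge0.
- by apply: sblZ; apply: sbl_pos.
- by apply: sblZ; apply: sbl_neg.
rewrite !S_Z //; try (by move=> t; apply: max_ge0); try (by apply: sbl_pos);
  try (by apply: sbl_neg).
by rewrite /rsum; ring.
Qed.

Lemma rsum_le f g : sbl f -> sbl g -> (forall t, f t <= g t) -> rsum f <= rsum g.
Proof.
move=> sf sg h; rewrite -subr_ge0 -rsumB // rsum_nn; last 2 first.
- by move=> t; rewrite subr_ge0.
- exact: sblB.
by apply: S_ge0 => t; rewrite subr_ge0.
Qed.

Lemma rsum_ge0 f : sbl f -> (forall t, 0 <= f t) -> 0 <= rsum f.
Proof. by move=> sf h; rewrite rsum_nn // S_ge0. Qed.

Lemma sbl_sum (I : Type) (s : seq I) (F : I -> T -> R) :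
  (forall i, sbl (F i)) -> sbl (fun t => \sum_(i <- s) F i t).
Proof.
move=> h; elim: s => [|i s IH].
  by apply: sbl_ext sbl0 => t; rewrite big_nil.
by apply: sbl_ext (sblD (h i) IH) => t; rewrite big_cons.
Qed.

Lemma rsum_sum (I : Type) (s : seq I) (F : I -> T -> R) :
  (forall i, sbl (F i)) -> rsum (fun t => \sum_(i <- s) F i t) = \sum_(i <- s) rsum (F i).
Proof.
move=> h; elim: s => [|i s IH].
  rewrite big_nil (rsum_ext (g := fun _ => 0)); last by move=> t; rewrite big_nil.
  by rewrite rsum_nn ?S0 //; apply: sbl0.
rewrite big_cons (rsum_ext (g := fun t => F i t + \sum_(j <- s) F j t)); last first.
  by move=> t; rewrite big_cons.
by rewrite rsumD ?IH //; apply: sbl_sum.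
Qed.

End Base3.

Section Base4.
Variable R : realType.
Local Open Scope ereal_scope.

Lemma E_reindex (T T' : choiceType) (e : T -> T') (h : T' -> R) :
  injective e -> (forall t', (forall t, e t != t') -> h t' = 0%R) ->
  E h = E (fun t => h (e t)).
Proof.
move=> inj h0; rewrite /E.
transitivity (\esum_(j in range e) (h j)%:E).
  rewrite [RHS]esum_mkcond; apply: eq_esum => j _; case: ifPn => // /negP Hn.
  rewrite h0 // => t; apply/eqP => et; apply: Hn; rewrite inE; by exists t.
apply: reindex_esum; apply: inj_bij => x y _ _; exact: inj.
Qed.

Lemma sbl_reindex (T T' : choiceType) (e : T -> T') (h : T' -> R) :
  injective e -> (forall t', (forall t, e t != t') -> h t' = 0%R) ->
  sbl h = sbl (fun t => h (e t)).
Proof.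
move=> inj h0; rewrite /sbl (E_reindex (e := e)) // => t' H.
by rewrite h0 // normr0.
Qed.

Lemma rsum_reindex (T T' : choiceType) (e : T -> T') (h : T' -> R) :
  injective e -> (forall t', (forall t, e t != t') -> h t' = 0%R) ->
  rsum h = rsum (fun t => h (e t)).
Proof.
move=> inj h0; rewrite /rsum /S (E_reindex (e := e) (h := fun t => Num.max (h t) 0%R)) //.
  rewrite (E_reindex (e := e) (h := fun t => Num.max (- h t)%R 0%R)) //.
  by move=> t' H; rewrite h0 // oppr0 maxxx.
by move=> t' H; rewrite h0 // maxxx.
Qed.

Lemma E_prod (T1 T2 : choiceType) (u : T1 -> R) (v : T2 -> R) :
  (forall t, (0 <= u t)%R) -> (forall t, (0 <= v t)%R) -> sbl u -> sbl v ->
  E (fun t : T1 * T2 => u t.1 * v t.2)%R = (S u * S v)%:E.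
Proof.
move=> hu hv su sv; rewrite /E.
have -> : ([set: T1 * T2] = [set: T1] `*`` (fun _ => [set: T2]))%classic.
  by apply/seteqP; split => // x.
rewrite -(esum_esum (a := fun i j => (u i * v j)%:E)); last first.
  by move=> i j _ _; rewrite lee_fin mulr_ge0.
transitivity (\esum_(i in [set: T1]) ((S v) * u i)%:E).
  apply: eq_esum => i _; rewrite -/(E (fun j => u i * v j)%R) E_Z // (E_fin hv) //.
  by rewrite -EFinM mulrC.
rewrite -/(E (fun i => S v * u i)%R) E_Z ?S_ge0 // (E_fin hu) // -EFinM mulrC.
by [].
Qed.

Lemma sbl_prod (T1 T2 : choiceType) (f : T1 -> R) (v : T2 -> R) :
  (forall t, (0 <= v t)%R) -> sbl f -> sbl v ->
  sbl (fun t : T1 * T2 => f t.1 * v t.2)%R.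
Proof.
move=> hv sf sv; rewrite /sbl.
rewrite (E_ext (b := fun t : T1 * T2 => `|f t.1| * v t.2)%R); last first.
  by move=> t; rewrite normrM (ger0_norm (hv _)).
rewrite (E_prod (u := fun x => `|f x|%R)) ?ltry //.
by apply: sbl_le sf => t; rewrite normr_id.
Qed.

Lemma rsum_prodl (T1 T2 : choiceType) (f : T1 -> R) (v : T2 -> R) :
  (forall t, (0 <= v t)%R) -> sbl f -> sbl v ->
  rsum (fun t : T1 * T2 => f t.1 * v t.2)%R = (rsum f * S v)%R.
Proof.
move=> hv sf sv.
rewrite (rsum_ext (g := fun t : T1 * T2 => (Num.max (f t.1) 0 * v t.2 -
                                          Num.max (- f t.1) 0 * v t.2)%R)); last first.
  by move=> t; rewrite {1}(max_posneg (f t.1)) mulrBl.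
have sp := sbl_pos sf; have sn := sbl_neg sf.
rewrite rsum_diff; last 4 first.
- by move=> t; rewrite mulr_ge0 // max_ge0.
- by move=> t; rewrite mulr_ge0 // max_ge0.
- exact: (sbl_prod (f := fun x => Num.max (f x) 0%R) hv sp sv).
- exact: (sbl_prod (f := fun x => Num.max (- f x)%R 0%R) hv sn sv).
rewrite /S (E_prod (u := fun t => Num.max (f t) 0%R)) //; last by move=> t; apply: max_ge0.
rewrite (E_prod (u := fun t => Num.max (- f t)%R 0%R)) //; last by move=> t; apply: max_ge0.
by rewrite /= /rsum /S mulrBl.
Qed.

Lemma rsum_prodr (T1 T2 : choiceType) (v : T1 -> R) (f : T2 -> R) :
  (forall t, (0 <= v t)%R) -> sbl f -> sbl v ->
  rsum (fun t : T1 * T2 => v t.1 * f t.2)%R = (S v * rsum f)%R.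
Proof.
move=> hv sf sv.
rewrite (rsum_reindex (e := fun t : T2 * T1 => (t.2, t.1))); last 2 first.
- by move=> [a b] [c d] /= [-> ->].
- by move=> [a b] H; have := H (b, a); rewrite eqxx.
rewrite (rsum_ext (g := fun t : T2 * T1 => f t.1 * v t.2)%R); last by move=> t; rewrite mulrC.
by rewrite rsum_prodl // mulrC.
Qed.

Lemma sbl_prodr (T1 T2 : choiceType) (v : T1 -> R) (f : T2 -> R) :
  (forall t, (0 <= v t)%R) -> sbl f -> sbl v ->
  sbl (fun t : T1 * T2 => v t.1 * f t.2)%R.
Proof.
move=> hv sf sv.
rewrite (sbl_reindex (e := fun t : T2 * T1 => (t.2, t.1))); last 2 first.
- by move=> [a b] [c d] /= [-> ->].
- by move=> [a b] H; have := H (b, a); rewrite eqxx.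
apply: sbl_ext (sbl_prod hv sf sv) => t; by rewrite mulrC.
Qed.

Lemma E_fubA (A : finType) (B : choiceType) (G : A * B -> R) :
  (forall k, (0 <= G k)%R) ->
  E G = \sum_(a : A) E (fun b => G (a, b)).
Proof.
move=> hG; rewrite /E.
transitivity (\esum_(k in [set: A * B]) \sum_(a : A) (if a == k.1 then G k else 0%R)%:E).
  apply: eq_esum => k _; rewrite sumEFin -big_mkcond /= big_pred1_eq //.
rewrite esum_sum; last by move=> k a _ _; case: ifP => _; rewrite lee_fin.
apply: eq_bigr => a _.
rewrite -/(E (fun k : A * B => if a == k.1 then G k else 0%R)).
rewrite (E_reindex (e := fun b => (a, b))); last 2 first.
- by move=> x y [].
- move=> [a' b] H; case: eqP => // ea; have := H b; by rewrite ea eqxx.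
by apply: E_ext => b /=; rewrite eqxx.
Qed.

Lemma sbl_fubA (A : finType) (B : choiceType) (G : A * B -> R) :
  (forall a, sbl (fun b => G (a, b))) -> sbl G.
Proof.
move=> h; rewrite /sbl (E_fubA (G := fun k => `|G k|%R)) //.
by apply: lte_sum_pinfty => a _; apply: h.
Qed.

Lemma S_fubA (A : finType) (B : choiceType) (G : A * B -> R) :
  (forall k, (0 <= G k)%R) -> (forall a, sbl (fun b => G (a, b))) ->
  S G = (\sum_(a : A) S (fun b => G (a, b)))%R.
Proof.
move=> hG h; rewrite /S E_fubA //.
rewrite (eq_bigr (fun a => (S (fun b => G (a, b)))%:E)); last first.
  by move=> a _; rewrite (E_fin (a := fun b => G (a, b))).
by rewrite sumEFin.
Qed.

Lemma rsum_fubA (A : finType) (B : choiceType) (G : A * B -> R) :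
  (forall a, sbl (fun b => G (a, b))) ->
  rsum G = (\sum_(a : A) rsum (fun b => G (a, b)))%R.
Proof.
move=> h; rewrite /rsum !S_fubA; try (by move=> k; apply: max_ge0).
- by rewrite -sumrB.
- by move=> a; apply: (sbl_neg (h a)).
- by move=> a; apply: (sbl_pos (h a)).
Qed.

End Base4.

Section RealAux2.
Variable R : realType.

Lemma ln_le_sub1 (u : R) : 0 < u -> ln u <= u - 1.
Proof.
move=> u0; have h : ln (1 + (u - 1)) <= u - 1 by apply: le_ln1Dx; lra.
have e : 1 + (u - 1) = u by ring.
by rewrite e in h.
Qed.

Lemma ln_ge_1sub (u : R) : 0 < u -> 1 - u^-1 <= ln u.
Proof.
move=> u0; have ui : 0 < u^-1 by rewrite invr_gt0.
have := ln_le_sub1 ui.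
by rewrite lnV ?posrE //; lra.
Qed.

Lemma divMl (m a b : R) : m != 0 -> (m * a) / (m * b) = a / b.
Proof. by move=> m0; rewrite invfM mulrACA divff // mul1r. Qed.

Lemma xlnx_bound (a b C : R) : 0 <= a -> 0 <= b -> 0 <= C -> a <= C * b ->
  `|a * ln (a / b)| <= C * a + b.
Proof.
move=> a0 b0 C0 hab.
have [->|apos] := eqVneq a 0; first by rewrite mul0r normr0 mulr0 add0r.
have a_gt0 : 0 < a by rewrite lt0r apos.
have b_gt0 : 0 < b.
  rewrite lt0r b0 andbT; apply/eqP => b_eq0; move: hab; rewrite b_eq0 mulr0.
  by move=> h; move: (lt_le_trans a_gt0 h); rewrite ltxx.
have u0 : 0 < a / b by rewrite divr_gt0.
have up : a / b <= C by rewrite ler_pdivrMr // mulrC.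
have h1 := ln_le_sub1 u0; have h2 := ln_ge_1sub u0.
rewrite invf_div in h2.
have e1 : a * (1 - b / a) = a - b by rewrite mulrBr mulr1 mulrCA divff ?mulr1.
have l1 : a - b <= a * ln (a / b).
  by rewrite -e1 ler_wpM2l // ltW.
have l2 : a * ln (a / b) <= a * C.
  apply: le_trans (_ : a * (a / b - 1) <= _); first by rewrite ler_wpM2l // ltW.
  by rewrite ler_wpM2l ?(ltW a_gt0) //; lra.
rewrite ler_norml; apply/andP; split.
- have : 0 <= C * a by rewrite mulr_ge0 // ltW.
  lra.
- rewrite mulrC in l2; lra.
Qed.

Lemma gibbs_pt (k q : R) : 0 <= k -> 0 <= q -> (0 < k -> 0 < q) ->
  k - q <= k * ln (k / q).
Proof.
move=> k0 q0 hq.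
have [->|kpos] := eqVneq k 0; first by rewrite mul0r sub0r oppr_le0.
have k_gt0 : 0 < k by rewrite lt0r kpos.
have q_gt0 := hq k_gt0.
have := ln_ge_1sub (divr_gt0 k_gt0 q_gt0); rewrite invf_div => h.
have e1 : k * (1 - q / k) = k - q by rewrite mulrBr mulr1 mulrCA divff ?mulr1.
by rewrite -e1 ler_wpM2l // ltW.
Qed.

Lemma le_sum1 (I : finType) (F : I -> R) (j : I) :
  (forall i, 0 <= F i) -> F j <= \sum_i F i.
Proof.
move=> h; rewrite (bigD1 j) //= lerDl; apply: sumr_ge0 => i _; exact: h.
Qed.

Lemma c0ln (c : R) : c * ln (c / c) = 0.
Proof.
have [->|c0] := eqVneq c 0; first by rewrite mul0r.
by rewrite divff // ln1 mulr0.
Qed.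

End RealAux2.

Section SumLn.
Variable R : realType.
Variable T : choiceType.

Lemma sbl_xlnx (a b : T -> R) (C : R) : (forall t, 0 <= a t) -> (forall t, 0 <= b t) ->
  0 <= C -> (forall t, a t <= C * b t) -> sbl a -> sbl b ->
  sbl (fun t => a t * ln (a t / b t)).
Proof.
move=> ha hb C0 hab sa sb; apply: (sbl_le' (g := fun t => C * a t + b t)).
  by move=> t; apply: xlnx_bound.
by apply: sblD => //; apply: sblZ.
Qed.

Lemma sblZr (f : T -> R) (c : R) : sbl f -> sbl (fun t => f t * c).
Proof. by move=> h; apply: sbl_ext (sblZ c h) => t; rewrite mulrC. Qed.

Lemma rsumZr (f : T -> R) (c : R) : sbl f -> rsum (fun t => f t * c) = rsum f * c.
Proof.
move=> h; rewrite (rsum_ext (g := fun t => c * f t)); last by move=> t; rewrite mulrC.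
by rewrite rsumZ // mulrC.
Qed.

End SumLn.

Section Chan.
Variable R : realType.

Definition chanP (A : finType) (B : choiceType) (k : A -> B -> R) :=
  (forall a b, 0 <= k a b) /\ (forall a, sbl (k a)) /\ (forall a, S (k a) = 1).

Lemma is_channel_chanP (A : finType) (k : A -> nat -> R) : is_channel k <-> chanP k.
Proof.
split.
- move=> [h0 h1]; have e a : E (k a) = 1%E by apply: h1.
  have s a : sbl (k a) by rewrite sbl_nnE // e ltry.
  by split => //; split => // a; rewrite /S e.
- move=> [h0 [h1 h2]]; split => // a.
  by have := E_fin (h0 a) (h1 a); rewrite h2; apply.
Qed.

Variables (A : finType) (B : choiceType) (k : A -> B -> R) (r : A -> R).
Hypothesis hk : chanP k.

Lemma q_ge0 : (forall a, 0 <= r a) -> forall b, 0 <= chan_out k r b.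
Proof.
move=> hr b; apply: sumr_ge0 => a _; apply: mulr_ge0 => //; exact: hk.1.
Qed.

Lemma q_term a b : (forall a, 0 <= r a) -> k a b * r a <= chan_out k r b.
Proof.
move=> hr; apply: (le_sum1 (F := fun a => k a b * r a)) => a'.
apply: mulr_ge0 => //; exact: hk.1.
Qed.

Lemma sbl_q : sbl (chan_out k r).
Proof.
by apply: (sbl_sum _ (F := fun a b => k a b * r a)) => a; apply: sblZr; apply: hk.2.1.
Qed.

Lemma rsum_q : rsum (chan_out k r) = \sum_a r a.
Proof.
rewrite /chan_out (rsum_sum _ (F := fun a b => k a b * r a)); last first.
  by move=> a; apply: sblZr; apply: hk.2.1.
apply: eq_bigr => a _; rewrite rsumZr; last by apply: hk.2.1.
by rewrite rsum_nn ?hk.2.2 ?mul1r //; [apply: hk.1 | apply: hk.2.1].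
Qed.

Definition gmi (ab : A * B) : R :=
  r ab.1 * k ab.1 ab.2 * ln (r ab.1 * k ab.1 ab.2 / (r ab.1 * chan_out k r ab.2)).

Lemma mi_chanE_csum : mi_chan r k = csum gmi.
Proof. by []. Qed.

Hypothesis hr : forall a, 0 < r a.
Let hr0 a : 0 <= r a. Proof. exact: ltW. Qed.

Lemma gmi_eq a b : gmi (a, b) = r a * (k a b * ln (k a b / chan_out k r b)).
Proof. by rewrite /gmi /= divMl ?gt_eqF // mulrA. Qed.

Lemma sbl_kln a : sbl (fun b => k a b * ln (k a b / chan_out k r b)).
Proof.
apply: (sbl_xlnx (C := (r a)^-1)).
- exact: hk.1.
- exact: q_ge0.
- by rewrite invr_ge0.
- by move=> b; rewrite mulrC ler_pdivlMr // q_term.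
- exact: hk.2.1.
- exact: sbl_q.
Qed.

Lemma sbl_gmi : sbl gmi.
Proof.
apply: sbl_fubA => a; apply: sbl_ext (sblZ (r a) (sbl_kln a)) => b.
by rewrite gmi_eq.
Qed.

Lemma mi_chanE : mi_chan r k = (rsum gmi)%:E.
Proof. by rewrite mi_chanE_csum csum_rsum // sbl_gmi. Qed.

Lemma gibbs : \sum_a r a = 1 -> 0 <= rsum gmi.
Proof.
move=> r1.
have sL : forall a, sbl (fun b => r a * (k a b - chan_out k r b)).
  by move=> a; apply: sblZ; apply: sblB; [apply: hk.2.1 | apply: sbl_q].
have sLL : sbl (fun ab : A * B => r ab.1 * (k ab.1 ab.2 - chan_out k r ab.2)).
  exact: sbl_fubA.
apply: le_trans (_ : 0 <= rsum (fun ab : A * B => r ab.1 * (k ab.1 ab.2 - chan_out k r ab.2))) _.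
  rewrite rsum_fubA //= (eq_bigr (fun _ => 0)) ?big1 // => a _.
  rewrite rsumZ; last by apply: sblB; [apply: hk.2.1 | apply: sbl_q].
  rewrite rsumB; [|apply: hk.2.1 | apply: sbl_q].
  by rewrite rsum_q r1 rsum_nn ?hk.2.2 ?subrr ?mulr0 //; [apply: hk.1 | apply: hk.2.1].
apply: rsum_le => //; first exact: sbl_gmi.
move=> [a b]; rewrite gmi_eq /=; apply: ler_wpM2l => //.
apply: gibbs_pt; [exact: hk.1 | exact: q_ge0 |].
move=> kpos; apply: lt_le_trans (q_term a b hr0); exact: mulr_gt0.
Qed.

End Chan.

Section Chain.
Variable R : realType.
Variables (X Y : finType) (p : X * Y -> R).
Hypothesis hp : forall xy, 0 < p xy.
Hypothesis hp1 : \sum_(xy : X * Y) p xy = 1.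
Variables (kX : X -> nat -> R) (kY : Y -> nat -> R).
Hypothesis hX : chanP kX.
Hypothesis hY : chanP kY.

Let hp0 xy : 0 <= p xy. Proof. exact: ltW. Qed.

Lemma mX_gt0 x : 0 < margX p x.
Proof.
case: (pickP (fun _ : Y => true)) => [y0 _|h].
  by apply: lt_le_trans (hp (x, y0)) (le_sum1 (F := fun y => p (x, y)) y0 _).
have : \sum_(xy : X * Y) p xy = 0 by rewrite big1 // => -[x' y]; have := h y.
by rewrite hp1 => /eqP; rewrite oner_eq0.
Qed.

Lemma mY_gt0 y : 0 < margY p y.
Proof.
case: (pickP (fun _ : X => true)) => [x0 _|h].
  by apply: lt_le_trans (hp (x0, y)) (le_sum1 (F := fun x => p (x, y)) x0 _).
have : \sum_(xy : X * Y) p xy = 0 by rewrite big1 // => -[x y']; have := h x.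
by rewrite hp1 => /eqP; rewrite oner_eq0.
Qed.

Let mX0 x : 0 <= margX p x. Proof. exact: ltW (mX_gt0 x). Qed.
Let mY0 y : 0 <= margY p y. Proof. exact: ltW (mY_gt0 y). Qed.

Lemma chanP_K : chanP (ktensor kX kY).
Proof.
split; [|split].
- move=> xy t; rewrite /ktensor mulr_ge0 //; [apply: hX.1 | apply: hY.1].
- move=> xy; apply: (sbl_prod (f := kX xy.1) (v := kY xy.2)); [apply: hY.1 | apply: hX.2.1 | apply: hY.2.1].
- move=> xy; rewrite /S /ktensor (E_prod (u := kX xy.1) (v := kY xy.2)).
  + by rewrite hX.2.2 hY.2.2 mulr1.
  + by apply: hX.1.
  + by apply: hY.1.
  + by apply: hX.2.1.
  + by apply: hY.2.1.
Qed.

Local Notation qX := (chan_out kX (margX p)).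
Local Notation qY := (chan_out kY (margY p)).
Local Notation K := (ktensor kX kY).
Local Notation qT := (chan_out (ktensor kX kY) p).

Lemma sum_pair_split (F : X -> R) (G : Y -> R) :
  \sum_(xy : X * Y) F xy.1 * G xy.2 = (\sum_x F x) * (\sum_y G y).
Proof.
rewrite -(pair_bigA _ (fun x y => F x * G y)) /= mulr_suml.
by apply: eq_bigr => x _; rewrite mulr_sumr.
Qed.

Lemma qXqY t : chan_out K (prodmarg p) t = qX t.1 * qY t.2.
Proof.
rewrite /chan_out /ktensor /prodmarg -sum_pair_split; apply: eq_bigr => xy _.
ring.
Qed.

Lemma sum_margX (F : X -> R) : \sum_(xy : X * Y) p xy * F xy.1 = \sum_x margX p x * F x.
Proof.
transitivity (\sum_(xy : X * Y) p (xy.1, xy.2) * F xy.1); first by apply: eq_bigr => -[x y].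
rewrite -(pair_bigA _ (fun x y => p (x, y) * F x)) /=.
by apply: eq_bigr => x _; rewrite /margX mulr_suml.
Qed.

Lemma sum_margY (G : Y -> R) : \sum_(xy : X * Y) p xy * G xy.2 = \sum_y margY p y * G y.
Proof.
transitivity (\sum_(xy : X * Y) p (xy.1, xy.2) * G xy.2); first by apply: eq_bigr => -[x y].
rewrite -(pair_bigA _ (fun x y => p (x, y) * G y)) /= exchange_big /=.
by apply: eq_bigr => y _; rewrite /margY mulr_suml.
Qed.

Definition lX x t := kX x t * ln (kX x t / qX t).
Definition lY y t := kY y t * ln (kY y t / qY t).
Definition MT (t : nat * nat) := ln (qT t / (qX t.1 * qY t.2)).
Definition hT (t : nat * nat) := qT t * MT t.

Lemma mi_TTE_csum : mi_TT p kX kY = csum hT.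
Proof. by []. Qed.

Lemma qT_term xy t : K xy t * p xy <= qT t.
Proof. by apply: (q_term chanP_K). Qed.

Lemma decomp xy t : gmi K p (xy, t) =
  p xy * kY xy.2 t.2 * lX xy.1 t.1 + p xy * kX xy.1 t.1 * lY xy.2 t.2
  - p xy * K xy t * MT t.
Proof.
rewrite (gmi_eq _ hp) /lX /lY /MT /ktensor.
have [e0|nx] := eqVneq (kX xy.1 t.1) 0; first by rewrite e0 !(mul0r, mulr0, subr0, addr0).
have [e0|ny] := eqVneq (kY xy.2 t.2) 0; first by rewrite e0 !(mul0r, mulr0, subr0, addr0, add0r).
have kx : 0 < kX xy.1 t.1 by rewrite lt0r nx; apply: hX.1.
have ky : 0 < kY xy.2 t.2 by rewrite lt0r ny; apply: hY.1.
have qx : 0 < qX t.1.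
  apply: lt_le_trans (q_term hX _ _ mX0); exact: mulr_gt0 kx (mX_gt0 _).
have qy : 0 < qY t.2.
  apply: lt_le_trans (q_term hY _ _ mY0); exact: mulr_gt0 ky (mY_gt0 _).
have qt : 0 < qT t.
  apply: lt_le_trans (qT_term xy t); rewrite /ktensor; apply: mulr_gt0 => //.
  exact: mulr_gt0.
have e : kX xy.1 t.1 * kY xy.2 t.2 / qT t =
   (kX xy.1 t.1 / qX t.1) * (kY xy.2 t.2 / qY t.2) / (qT t / (qX t.1 * qY t.2)).
  by field; rewrite !gt_eqF.
rewrite e ln_div ?posrE; last 2 first.
- by rewrite mulr_gt0 // divr_gt0.
- by rewrite divr_gt0 // mulr_gt0.
rewrite lnM ?posrE ?divr_gt0 //.
by ring.
Qed.


Lemma sbl_lX x : sbl (lX x).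
Proof. exact: (sbl_kln hX mX_gt0 x). Qed.

Lemma sbl_lY y : sbl (lY y).
Proof. exact: (sbl_kln hY mY_gt0 y). Qed.

Lemma sbl_qT : sbl qT.
Proof. exact: (sbl_q p chanP_K). Qed.

Lemma qT_ge0 t : 0 <= qT t.
Proof. exact: (q_ge0 chanP_K hp0). Qed.

Lemma qX_ge0 t : 0 <= qX t.
Proof. exact: (q_ge0 hX mX0). Qed.

Lemma qY_ge0 t : 0 <= qY t.
Proof. exact: (q_ge0 hY mY0). Qed.

Lemma sbl_hT : sbl hT.
Proof.
pose C := \sum_(xy : X * Y) p xy / (margX p xy.1 * margY p xy.2).
have C0 : 0 <= C.
  apply: sumr_ge0 => xy _; apply: divr_ge0 => //; exact: mulr_ge0.
have pC xy : p xy <= C * (margX p xy.1 * margY p xy.2).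
  have m0 : margX p xy.1 * margY p xy.2 != 0 by rewrite mulf_neq0 // gt_eqF // ?mX_gt0 ?mY_gt0.
  rewrite -{1}(divfK m0 (p xy)); apply: ler_wpM2r; first exact: mulr_ge0.
  apply: (le_sum1 (F := fun xy => p xy / (margX p xy.1 * margY p xy.2))) => xy'.
  apply: divr_ge0 => //; exact: mulr_ge0.
apply: (sbl_xlnx (a := qT) (b := fun t => qX t.1 * qY t.2) (C := C)).
- exact: qT_ge0.
- by move=> t; apply: mulr_ge0; [apply: qX_ge0 | apply: qY_ge0].
- exact: C0.
- move=> t; rewrite -qXqY /chan_out mulr_sumr; apply: ler_sum => xy _.
  rewrite /prodmarg mulrCA; apply: ler_wpM2l; first by apply: chanP_K.1.
  exact: pC.
- exact: sbl_qT.
- apply: (sbl_prod (f := qX) (v := qY)); [exact: qY_ge0 | exact: (sbl_q _ hX) | exact: (sbl_q _ hY)].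
Qed.

Lemma sbl_gmiX : forall x, sbl (fun t => gmi kX (margX p) (x, t)).
Proof.
move=> x; apply: sbl_ext (sblZ (margX p x) (sbl_lX x)) => t.
by rewrite (gmi_eq _ mX_gt0).
Qed.

Lemma sbl_gmiY : forall y, sbl (fun t => gmi kY (margY p) (y, t)).
Proof.
move=> y; apply: sbl_ext (sblZ (margY p y) (sbl_lY y)) => t.
by rewrite (gmi_eq _ mY_gt0).
Qed.

Lemma rsum_gmiX : rsum (gmi kX (margX p)) = \sum_x margX p x * rsum (lX x).
Proof.
rewrite (rsum_fubA (G := gmi kX (margX p))); last exact: sbl_gmiX.
apply: eq_bigr => x _; rewrite -rsumZ; last exact: sbl_lX.
by apply: rsum_ext => t; rewrite (gmi_eq _ mX_gt0).
Qed.

Lemma rsum_gmiY : rsum (gmi kY (margY p)) = \sum_y margY p y * rsum (lY y).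
Proof.
rewrite (rsum_fubA (G := gmi kY (margY p))); last exact: sbl_gmiY.
apply: eq_bigr => y _; rewrite -rsumZ; last exact: sbl_lY.
by apply: rsum_ext => t; rewrite (gmi_eq _ mY_gt0).
Qed.

Let G1 := fun z : (X * Y) * (nat * nat) => p z.1 * kY z.1.2 z.2.2 * lX z.1.1 z.2.1.
Let G2 := fun z : (X * Y) * (nat * nat) => p z.1 * kX z.1.1 z.2.1 * lY z.1.2 z.2.2.
Let G3 := fun z : (X * Y) * (nat * nat) => p z.1 * K z.1 z.2 * MT z.2.

Let s1 xy : sbl (fun t => G1 (xy, t)).
Proof.
apply: sbl_ext (sbl_prod (f := fun t1 => p xy * lX xy.1 t1) (v := kY xy.2) _ _ _).
- by move=> t; rewrite /G1 /=; ring.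
- exact: hY.1.
- exact: sblZ (sbl_lX _).
- exact: hY.2.1.
Qed.

Let s2 xy : sbl (fun t => G2 (xy, t)).
Proof.
apply: sbl_ext (sbl_prodr (v := kX xy.1) (f := fun t2 => p xy * lY xy.2 t2) _ _ _).
- by move=> t; rewrite /G2 /=; ring.
- exact: hX.1.
- exact: sblZ (sbl_lY _).
- exact: hX.2.1.
Qed.

Let s3 xy : sbl (fun t => G3 (xy, t)).
Proof.
apply: (sbl_le (g := hT)); last exact: sbl_hT.
move=> t; have h1 : 0 <= p xy * K xy t by apply: mulr_ge0 => //; apply: chanP_K.1.
have h2 : p xy * K xy t <= qT t by rewrite mulrC; apply: qT_term.
rewrite /G3 /hT /= normrM (normrM (qT t)) (ger0_norm h1) (ger0_norm (qT_ge0 t)).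
by apply: ler_wpM2r.
Qed.

Lemma chain : rsum (gmi K p) =
  rsum (gmi kX (margX p)) + rsum (gmi kY (margY p)) - rsum hT.
Proof.
rewrite (rsum_ext (g := fun z => G1 z + G2 z - G3 z)); last first.
  by move=> [xy t]; rewrite decomp.
have S1 : sbl G1 by apply: sbl_fubA.
have S2 : sbl G2 by apply: sbl_fubA.
have S3 : sbl G3 by apply: sbl_fubA.
rewrite rsumB; [|by apply: sblD | by []].
rewrite rsumD //.
congr (_ + _ - _).
- rewrite rsum_gmiX (rsum_fubA (G := G1)) //.
  rewrite -(sum_margX (fun x => rsum (lX x))); apply: eq_bigr => xy _.
  rewrite (rsum_ext (g := fun t => (p xy * lX xy.1 t.1) * kY xy.2 t.2)); last first.
    by move=> t; rewrite /G1 /=; ring.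
  rewrite (rsum_prodl (f := fun t1 => p xy * lX xy.1 t1) (v := kY xy.2)).
  + by rewrite hY.2.2 mulr1 rsumZ // sbl_lX.
  + exact: hY.1.
  + exact: sblZ (sbl_lX _).
  + exact: hY.2.1.
- rewrite rsum_gmiY (rsum_fubA (G := G2)) //.
  rewrite -(sum_margY (fun y => rsum (lY y))); apply: eq_bigr => xy _.
  rewrite (rsum_ext (g := fun t => kX xy.1 t.1 * (p xy * lY xy.2 t.2))); last first.
    by move=> t; rewrite /G2 /=; ring.
  rewrite (rsum_prodr (v := kX xy.1) (f := fun t2 => p xy * lY xy.2 t2)).
  + by rewrite hX.2.2 mul1r rsumZ // sbl_lY.
  + exact: hX.1.
  + exact: sblZ (sbl_lY _).
  + exact: hX.2.1.
- rewrite (rsum_fubA (G := G3)) //.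
  rewrite -(rsum_sum _ (F := fun xy t => G3 (xy, t))) //.
  apply: rsum_ext => t; rewrite /hT /chan_out mulr_suml; apply: eq_bigr => xy _.
  by rewrite /G3 /=; ring.
Qed.

Lemma gibbsK : 0 <= rsum (gmi K p).
Proof. exact: (gibbs chanP_K hp hp1). Qed.

Lemma sbl_gmiK : sbl (gmi K p).
Proof. exact: (sbl_gmi chanP_K hp). Qed.

End Chain.

Section Erase.
Variable R : realType.

Definition er (A : Type) (al : R) (k : A -> nat -> R) : A -> nat -> R :=
  fun x t => match t with 0%N => 1 - al | t'.+1 => al * k x t' end.

Lemma E_pt (c : R) : (0 <= c) ->
  E (fun t : nat => if t is 0%N then c else 0) = c%:E.
Proof.
move=> c0; rewrite /E.
rewrite (_ : \esum_(t in [set: nat]) _ = \esum_(t in [set 0%N]) (if t is 0%N then c else 0)%:E).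
  by rewrite esum_set1.
rewrite [RHS]esum_mkcond; apply: eq_esum => -[|t] _ /=; first by rewrite mem_set.
by case: ifP.
Qed.

Variables (A : finType) (al : R) (k : A -> nat -> R).
Hypothesis al0 : 0 <= al.
Hypothesis al1 : al <= 1.
Hypothesis hk : chanP k.

Lemma chanP_er : chanP (er al k).
Proof.
have h0 : forall a b, 0 <= er al k a b.
  by move=> a [|b] /=; [rewrite subr_ge0 | rewrite mulr_ge0 //; apply: hk.1].
have sh : forall a, sbl (fun t : nat => if t is t'.+1 then al * k a t' else 0).
  move=> a; rewrite (sbl_reindex (e := succn)); last 2 first.
  - exact: succn_inj.
  - by move=> [|t] // H; have := H t; rewrite eqxx.
  by apply: sblZ; apply: hk.2.1.
have Eh : forall a, E (fun t : nat => if t is t'.+1 then al * k a t' else 0) = al%:E.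
  move=> a.
  rewrite (E_reindex (e := succn)); last 2 first.
  - exact: succn_inj.
  - by move=> [|t] // H; have := H t; rewrite eqxx.
  rewrite E_Z //; last by apply: hk.1.
  by rewrite (E_fin (hk.1 a) (hk.2.1 a)) hk.2.2 mule1.
have sd : sbl (fun t : nat => if t is 0%N then 1 - al else 0).
  by rewrite sbl_nnE ?E_pt ?ltry ?subr_ge0 // => -[|t] //=; rewrite subr_ge0.
have e a : forall t, er al k a t = (if t is 0%N then 1 - al else 0) +
                                   (if t is t'.+1 then al * k a t' else 0).
  by move=> [|t] /=; rewrite ?addr0 ?add0r.
split => //; split => a.
  by apply: sbl_ext (sblD sd (sh a)) => t; rewrite e.
rewrite (S_ext (e a)) S_D //; last 2 first.
- by move=> [|t] //=; rewrite subr_ge0.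
- by move=> [|t] //=; rewrite mulr_ge0 //; apply: hk.1.
rewrite /S E_pt ?subr_ge0 // Eh /=; ring.
Qed.

Variable r : A -> R.
Hypothesis hr : forall a, 0 < r a.
Hypothesis hr1 : \sum_a r a = 1.

Lemma q_er0 : chan_out (er al k) r 0%N = 1 - al.
Proof. by rewrite /chan_out /= -mulr_sumr hr1 mulr1. Qed.

Lemma q_erS t : chan_out (er al k) r t.+1 = al * chan_out k r t.
Proof. by rewrite /chan_out /= mulr_sumr; apply: eq_bigr => a _; rewrite mulrA. Qed.

Lemma scale_ln (c x y : R) : c * x * ln (c * x / (c * y)) = c * (x * ln (x / y)).
Proof.
have [->|c0] := eqVneq c 0; first by rewrite !mul0r.
by rewrite divMl // mulrA.
Qed.

Lemma rsum_gmi_er : rsum (gmi (er al k) r) = al * rsum (gmi k r).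
Proof.
rewrite (rsum_reindex (e := fun z : A * nat => (z.1, z.2.+1))); last 2 first.
- by move=> [a t] [b u] /= [-> ->].
- move=> [a [|t]] H; last by have := H (a, t); rewrite eqxx.
  by rewrite /gmi /= q_er0 c0ln.
rewrite -rsumZ; last exact: sbl_gmi.
apply: rsum_ext => -[a t]; rewrite /gmi /= q_erS.
rewrite (mulrCA (r a) al) (mulrCA (r a) al (chan_out k r t)).
by rewrite (scale_ln al).
Qed.

Lemma mi_chan_er : mi_chan r (er al k) = (al * rsum (gmi k r))%:E.
Proof. by rewrite (mi_chanE chanP_er hr) rsum_gmi_er. Qed.

End Erase.

Section EraseTT.
Variable R : realType.
Variables (X Y : finType) (p : X * Y -> R).
Hypothesis hp : forall xy, 0 < p xy.
Hypothesis hp1 : \sum_(xy : X * Y) p xy = 1.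

Lemma sum_mX : \sum_x margX p x = 1.
Proof.
rewrite /margX pair_bigA /= -hp1; apply: eq_bigr => -[x y] //.
Qed.

Lemma sum_mY : \sum_y margY p y = 1.
Proof.
rewrite /margY exchange_big pair_bigA /= -hp1; apply: eq_bigr => -[x y] //.
Qed.

Variables (kX : X -> nat -> R) (kY : Y -> nat -> R).
Hypothesis hX : chanP kX.
Hypothesis hY : chanP kY.
Variables (al be : R).

Local Notation qX := (chan_out kX (margX p)).
Local Notation qY := (chan_out kY (margY p)).
Local Notation qT := (chan_out (ktensor kX kY) p).
Local Notation kX' := (er al kX).
Local Notation kY' := (er be kY).
Local Notation qX' := (chan_out kX' (margX p)).
Local Notation qY' := (chan_out kY' (margY p)).
Local Notation qT' := (chan_out (ktensor kX' kY') p).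

Lemma qX'0 : qX' 0%N = 1 - al.
Proof. by apply: q_er0; apply: sum_mX. Qed.
Lemma qY'0 : qY' 0%N = 1 - be.
Proof. by apply: q_er0; apply: sum_mY. Qed.
Lemma qX'S i : qX' i.+1 = al * qX i.
Proof. exact: q_erS. Qed.
Lemma qY'S j : qY' j.+1 = be * qY j.
Proof. exact: q_erS. Qed.

Lemma qT'00 : qT' (0%N, 0%N) = (1 - al) * (1 - be).
Proof. by rewrite /chan_out /ktensor /= -mulr_sumr hp1 mulr1. Qed.

Lemma qT'0S j : qT' (0%N, j.+1) = (1 - al) * (be * qY j).
Proof.
rewrite /chan_out /ktensor /=.
have := sum_margY p (fun y => kY y j); rewrite /chan_out => e.
rewrite (eq_bigr (fun y => margY p y * kY y j)); last by move=> y _; rewrite mulrC.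
rewrite -e mulr_sumr mulr_sumr; apply: eq_bigr => xy _; ring.
Qed.

Lemma qT'S0 i : qT' (i.+1, 0%N) = (al * qX i) * (1 - be).
Proof.
rewrite /chan_out /ktensor /=.
have := sum_margX p (fun x => kX x i); rewrite /chan_out => e.
rewrite (eq_bigr (fun x => margX p x * kX x i)); last by move=> x _; rewrite mulrC.
rewrite -e mulr_sumr mulr_suml; apply: eq_bigr => xy _; ring.
Qed.

Lemma qT'SS i j : qT' (i.+1, j.+1) = (al * be) * qT (i, j).
Proof.
rewrite /chan_out /ktensor /= mulr_sumr; apply: eq_bigr => xy _; ring.
Qed.

Lemma rsum_hT_er : rsum (hT p kX' kY') = al * be * rsum (hT p kX kY).
Proof.
rewrite (rsum_reindex (e := fun t : nat * nat => (t.1.+1, t.2.+1))); last 2 first.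
- by move=> [a b] [c d] /= [-> ->].
- move=> [[|i] [|j]] H; rewrite /hT /MT /=.
  + by rewrite qT'00 qX'0 qY'0 c0ln.
  + by rewrite qT'0S qX'0 qY'S c0ln.
  + by rewrite qT'S0 qX'S qY'0 c0ln.
  + by have := H (i, j); rewrite eqxx.
rewrite -rsumZ; last exact: (sbl_hT hp hp1 hX hY).
apply: rsum_ext => -[i j]; rewrite /hT /MT /= qT'SS qX'S qY'S.
by rewrite (mulrACA al) (scale_ln (al * be)).
Qed.

End EraseTT.

Section Final.
Variable R : realType.
Variables (X Y : finType) (p : X * Y -> R).
Hypothesis hp : forall xy, 0 < p xy.
Hypothesis hp1 : \sum_(xy : X * Y) p xy = 1.

Definition chn (k : chpair R X Y) := chanP k.1 /\ chanP k.2.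
Definition IX (k : chpair R X Y) := rsum (gmi k.1 (margX p)).
Definition IY (k : chpair R X Y) := rsum (gmi k.2 (margY p)).
Definition MU (k : chpair R X Y) := rsum (hT p k.1 k.2).

Lemma chnE k : (is_channel k.1 /\ is_channel k.2) <-> chn k.
Proof.
split; move=> [h1 h2]; split; by apply/is_channel_chanP.
Qed.

Lemma objSE k : chn k -> objS p k = (IX k + IY k)%:E.
Proof.
move=> [h1 h2]; rewrite /objS (mi_chanE h1 (mX_gt0 hp hp1)) (mi_chanE h2 (mY_gt0 hp hp1)).
by [].
Qed.

Lemma miTTE k : chn k -> mi_TT p k.1 k.2 = (MU k)%:E.
Proof.
move=> [h1 h2]; rewrite mi_TTE_csum csum_rsum //; exact: (sbl_hT hp hp1 h1 h2).
Qed.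

Lemma objAE k : chn k -> objA p k = (IX k + IY k - MU k)%:E.
Proof.
move=> [h1 h2]; rewrite /objA (mi_chanE (chanP_K h1 h2) hp).
by rewrite (chain hp hp1 h1 h2).
Qed.

Lemma gibbs_chn k : chn k -> MU k <= IX k + IY k.
Proof.
move=> [h1 h2]; have := gibbsK hp hp1 h1 h2; rewrite (chain hp hp1 h1 h2).
rewrite /MU /IX /IY; lra.
Qed.

Lemma klE k : kl (chan_out (ktensor k.1 k.2) p) (chan_out (ktensor k.1 k.2) (prodmarg p)) =
  mi_TT p k.1 k.2.
Proof.
rewrite /kl /mi_TT /=; congr csum; apply/funext => t; by rewrite qXqY.
Qed.

Lemma erase k (al : R) : chn k -> 0 <= al -> al <= 1 ->
  let k' := (er al k.1, er al k.2) : chpair R X Y in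
  [/\ chn k', IX k' = al * IX k, IY k' = al * IY k & MU k' = al * al * MU k].
Proof.
move=> [h1 h2] a0 a1 /=; split.
- by split; apply: chanP_er.
- by rewrite /IX /= rsum_gmi_er // ?sum_mX //; apply: mX_gt0.
- by rewrite /IY /= rsum_gmi_er // ?sum_mY //; apply: mY_gt0.
- by rewrite /MU /= rsum_hT_er.
Qed.

Lemma scale w (lam : R) : 0 <= lam -> chn w -> lam <= MU w ->
  exists w', [/\ chn w', MU w' = lam, IX w' + IY w' <= IX w + IY w &
                 (lam < MU w -> IX w' + IY w' < IX w + IY w)].
Proof.
move=> l0 cw lw; have [elw|ltw] := eqVneq (MU w) lam.
  by exists w; split => //; rewrite elw ltxx.
have mlt : lam < MU w by rewrite lt_neqAle eq_sym ltw lw.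
have mu0 : 0 < MU w by apply: le_lt_trans mlt.
have sg := gibbs_chn cw.
pose q := lam / MU w.
have q0 : 0 <= q by rewrite divr_ge0 // ltW.
have q1 : q < 1 by rewrite ltr_pdivrMr // mul1r.
pose al := Num.sqrt q.
have a0 : 0 <= al by apply: sqrtr_ge0.
have aa : al * al = q by rewrite -expr2 sqr_sqrtr.
have a1 : al < 1 by nra.
have [c1 c2 c3 c4] := erase cw a0 (ltW a1).
exists (er al w.1, er al w.2); split => //.
- by rewrite c4 aa /q divfK // gt_eqF.
- rewrite c2 c3 -mulrDr; apply: ler_piMl; [lra | exact: ltW].
- move=> _; have S0 : 0 < IX w + IY w by lra.
  by rewrite c2 c3 -mulrDr gtr_pMl.
Qed.

End Final.

Unset Implicit Arguments.
Set Strict Implicit.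

Theorem proposition6 (R : realType) (X Y : finType) (p : X * Y -> R) (lam : R) :
  (forall xy, 0 < p xy) ->
  \sum_(xy : X * Y) p xy = 1 ->
  0 <= lam -> lam <= mutinf p ->
  (forall k : chpair R X Y,
     is_argmin (feasS_ge p lam) (@objS R X Y p) k <->
     is_argmin (feasS_eq p lam) (@objS R X Y p) k) /\
  (forall k : chpair R X Y,
     is_argmin (feasA p lam) (@objA R X Y p) k <->
     is_argmin (feasS_ge p lam) (@objS R X Y p) k).
Proof.
move=> hp hp1 l0 _.
have Fge k : feasS_ge p lam k <-> chn k /\ lam <= MU p k.
  split.
  - move=> [h1 [h2 h3]]; have c : chn k by apply/chnE.
    by split => //; move: h3; rewrite (miTTE hp hp1 c) lee_fin.
  - move=> [c h]; have [h1 h2] := proj2 (chnE k) c; split => //; split => //.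
    by rewrite (miTTE hp hp1 c) lee_fin.
have Feq k : feasS_eq p lam k <-> chn k /\ MU p k = lam.
  split.
  - move=> [h1 [h2 h3]]; have c : chn k by apply/chnE.
    by split => //; move: h3; rewrite (miTTE hp hp1 c) => -[].
  - move=> [c h]; have [h1 h2] := proj2 (chnE k) c; split => //; split => //.
    by rewrite (miTTE hp hp1 c) h.
have FA k : feasA p lam k <-> feasS_eq p lam k.
  by rewrite /feasA /feasS_eq klE.
have part1 : forall k : chpair R X Y,
     is_argmin (feasS_ge p lam) (@objS R X Y p) k <->
     is_argmin (feasS_eq p lam) (@objS R X Y p) k.
  move=> k; split.
  - move=> [/Fge [ck lk] hmin].
    have ek : MU p k = lam.
      apply/eqP; rewrite eq_le lk andbT leNgt; apply/negP => lt.
      have [w' [cw' mw' _ st]] := scale hp hp1 l0 ck lk.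
      have := hmin w'; rewrite (objSE hp hp1 ck) (objSE hp hp1 cw') lee_fin.
      have st' := st lt; move=> h.
      have fw' : feasS_ge p lam w' by apply/Fge; split => //; rewrite mw' lexx.
      by have := h fw'; rewrite leNgt st'.
    split; first by apply/Feq.
    by move=> w /Feq [cw mw]; apply: hmin; apply/Fge; split => //; rewrite mw.
  - move=> [/Feq [ck mk] hmin]; split.
      by apply/Fge; split => //; rewrite mk lexx.
    move=> w /Fge [cw lw].
    have [w' [cw' mw' le' _]] := scale hp hp1 l0 cw lw.
    apply: le_trans (hmin w' (proj2 (Feq w') (conj cw' mw'))) _.
    by rewrite (objSE hp hp1 cw') (objSE hp hp1 cw) lee_fin.
split => // k; apply: (iff_trans _ (iff_sym (part1 k))); split.
- move=> [/FA fk hmin]; split => // w /[dup] fw /Feq [cw mw].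
  have [ck mk] := proj1 (Feq k) fk.
  have := hmin w (proj2 (FA w) fw).
  rewrite (objAE hp hp1 ck) (objAE hp hp1 cw) (objSE hp hp1 ck) (objSE hp hp1 cw) !lee_fin.
  by rewrite mk mw lerD2r.
- move=> [fk hmin]; split; first by apply/FA.
  move=> w /FA fw; have [ck mk] := proj1 (Feq k) fk; have [cw mw] := proj1 (Feq w) fw.
  have := hmin w fw.
  rewrite (objAE hp hp1 ck) (objAE hp hp1 cw) (objSE hp hp1 ck) (objSE hp hp1 cw) !lee_fin.
  by rewrite mk mw lerD2r.
Qed.
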